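(* Let $b>\tfrac12$ and $m\in\mathbb Z$, and define the functions $f(t)=\vartheta_3(\pi t+2\pi bm,\,ib)$ and $g(t)=\vartheta_3(\pi t,\,ib)$ for $t\in\mathbb R$. Then $$\sup_{t\in\mathbb R}|f(t)-g(t)|\le 8\pi|m|\,(b-\tfrac12)\sum_{k=1}^\infty k\,e^{-\pi bk^2}.$$
   Context: For $z,t\in\mathbb C$ with $\operatorname{Im}t>0$: $\vartheta_3(z,t)=\sum_{n\in\mathbb Z}e^{\pi i t n^2}e^{2izn}$. *)

(* Defs.v *)
From Stdlib Require Import Reals ZArith.
From Coquelicot Require Import Coquelicot.
Open Scope R_scope.

Definition Cexp (z : C) : C :=
  (exp (Re z) * cos (Im z), exp (Re z) * sin (Im z)).

(* Sum of a complex series sum_{n >= 0} a n, computed componentwise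
   (C = R * R): real part = sum of real parts, imaginary part = sum of
   imaginary parts; this is the usual sum whenever the series converges. *)
Definition CSeries (a : nat -> C) : C :=
  (Series (fun n => Re (a n)), Series (fun n => Im (a n))).

Definition CSeriesZ (a : Z -> C) : C :=
  (CSeries (fun n => a (Z.of_nat n)) + CSeries (fun n => a (- Z.of_nat (S n))%Z))%C.

Definition theta3 (z t : C) : C :=
  CSeriesZ (fun n : Z =>
    (Cexp (RtoC PI * Ci * t * RtoC (IZR n) ^ 2) * Cexp (2 * Ci * z * RtoC (IZR n)))%C).

Definition Series1 (a : nat -> R) : R := Series (fun k => a (S k)).

(* Main.v *)
Require Import Defs.
From Stdlib Require Import Reals ZArith Lra Psatz.
From Coquelicot Require Import Coquelicot.
Open Scope R_scope.

Definition cc (b x y : R) : R := exp (- PI * b * y ^ 2) * cos (2 * x * y).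
Definition ss (b x y : R) : R := exp (- PI * b * y ^ 2) * sin (2 * x * y).

Lemma term_eq (b x : R) (n : Z) :
  (Cexp (RtoC PI * Ci * ((0, b) : C) * RtoC (IZR n) ^ 2) *
   Cexp (2 * Ci * RtoC x * RtoC (IZR n)))%C = (cc b x (IZR n), ss b x (IZR n)).
Proof.
  assert (E1: (RtoC PI * Ci * ((0,b):C) * RtoC (IZR n) ^ 2)%C = (- PI * b * IZR n ^ 2, 0)).
  { unfold Cpow, Cmult, RtoC, Ci; simpl; f_equal; ring. }
  assert (E2: (2 * Ci * RtoC x * RtoC (IZR n))%C = (0, 2*x*IZR n)).
  { unfold Cpow, Cmult, RtoC, Ci; simpl; f_equal; ring. }
  rewrite E1, E2. unfold Cexp, cc, ss; simpl. rewrite cos_0, sin_0, exp_0.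
  unfold Cmult; simpl; f_equal; ring.
Qed.
Lemma exp_le_mono x y : x <= y -> exp x <= exp y.
Proof. intros [H|H]; [left; apply exp_increasing; auto | right; subst; auto]. Qed.

Lemma exp_pow_half n : exp (-1/2) ^ n = exp (- INR n / 2).
Proof.
  induction n. simpl. replace (-0/2) with 0 by field. rewrite exp_0; auto.
  simpl pow. rewrite IHn, <- exp_plus, S_INR. f_equal. field.
Qed.

Lemma PI_gt3 : 3 < PI.
Proof. pose proof PI2_3_2. lra. Qed.

Lemma INR_sq_ge n : INR n <= INR n ^ 2.
Proof. destruct n. simpl; lra. pose proof (pos_INR n). rewrite S_INR. nra. Qed.

Lemma bnd1 b n : 1/2 < b -> exp (- PI * b * INR n ^ 2) <= exp (-1/2) ^ n.
Proof.
  intros hb. rewrite exp_pow_half. apply exp_le_mono.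
  pose proof (INR_sq_ge n). pose proof (pos_INR n). pose proof PI_gt3.
  assert (3/2 < PI * b) by nra. assert (0 <= INR n ^ 2) by nra. nra.
Qed.

Lemma bnd2 b n : 1/2 < b -> INR n * exp (- PI * b * INR n ^ 2) <= exp (-1/2) ^ n.
Proof.
  intros hb. rewrite exp_pow_half.
  pose proof (INR_sq_ge n). pose proof (pos_INR n). pose proof PI_gt3.
  apply Rle_trans with (exp (INR n) * exp (- PI * b * INR n ^ 2)).
  apply Rmult_le_compat_r. left; apply exp_pos. pose proof (exp_ineq1_le (INR n)); lra.
  rewrite <- exp_plus. apply exp_le_mono.
  assert (3/2 < PI * b) by nra. assert (0 <= INR n ^ 2) by nra. nra.
Qed.

Lemma ex_geo : ex_series (fun n => exp (-1/2) ^ n).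
Proof.
  apply ex_series_geom. rewrite Rabs_pos_eq by (left; apply exp_pos).
  rewrite <- exp_0. apply exp_increasing. lra.
Qed.

Lemma exs_dom (a : nat -> R) : (forall n, Rabs (a n) <= exp (-1/2) ^ n) -> ex_series a.
Proof. intros H. apply (ex_series_le a _ H ex_geo). Qed.

Lemma exs_cc b x : 1/2 < b -> ex_series (fun n => cc b x (INR n)).
Proof.
  intros hb. apply exs_dom. intros n. unfold cc. rewrite Rabs_mult, (Rabs_pos_eq (exp _)) by (left; apply exp_pos).
  apply Rle_trans with (exp (- PI * b * INR n ^ 2) * 1).
  apply Rmult_le_compat_l. left; apply exp_pos. apply Rabs_le, COS_bound. rewrite Rmult_1_r. apply bnd1; auto.
Qed.

Lemma exs_ss b x : 1/2 < b -> ex_series (fun n => ss b x (INR n)).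
Proof.
  intros hb. apply exs_dom. intros n. unfold ss. rewrite Rabs_mult, (Rabs_pos_eq (exp _)) by (left; apply exp_pos).
  apply Rle_trans with (exp (- PI * b * INR n ^ 2) * 1).
  apply Rmult_le_compat_l. left; apply exp_pos. apply Rabs_le, SIN_bound. rewrite Rmult_1_r. apply bnd1; auto.
Qed.

Lemma exs_k b : 1/2 < b -> ex_series (fun n => INR n * exp (- PI * b * INR n ^ 2)).
Proof.
  intros hb. apply exs_dom. intros n. rewrite Rabs_pos_eq. apply bnd2; auto.
  apply Rmult_le_pos. apply pos_INR. left; apply exp_pos.
Qed.

Definition Rt b x := Series (fun n => cc b x (INR n)) + Series (fun n => cc b x (INR (S n))).

Lemma theta_eq b x : 1/2 < b -> theta3 (RtoC x) ((0, b) : C) = RtoC (Rt b x).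
Proof.
  intros hb. unfold theta3, CSeriesZ, CSeries.
  set (a := fun n : Z => (Cexp (RtoC PI * Ci * ((0, b) : C) * RtoC (IZR n) ^ 2) *
   Cexp (2 * Ci * RtoC x * RtoC (IZR n)))%C).
  assert (Ha : forall n, a n = (cc b x (IZR n), ss b x (IZR n))) by (intro; apply term_eq).
  assert (H1 : Series (fun n => Re (a (Z.of_nat n))) = Series (fun n => cc b x (INR n))).
  { apply Series_ext; intro n; rewrite Ha, <- INR_IZR_INZ; reflexivity. }
  assert (H2 : Series (fun n => Im (a (Z.of_nat n))) = Series (fun n => ss b x (INR n))).
  { apply Series_ext; intro n; rewrite Ha, <- INR_IZR_INZ; reflexivity. }
  assert (H3 : Series (fun n => Re (a (- Z.of_nat (S n))%Z)) = Series (fun n => cc b x (INR (S n)))).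
  { apply Series_ext; intro n; rewrite Ha, opp_IZR, <- INR_IZR_INZ; unfold Re; cbn [fst]. unfold cc.
    replace (2 * x * - INR (S n)) with (- (2 * x * INR (S n))) by ring. rewrite cos_neg. replace ((- INR (S n))^2) with (INR (S n) ^2) by ring. reflexivity. }
  assert (H4 : Series (fun n => Im (a (- Z.of_nat (S n))%Z)) = Series (fun n => - ss b x (INR (S n)))).
  { apply Series_ext; intro n; rewrite Ha, opp_IZR, <- INR_IZR_INZ; unfold Im; cbn [snd]. unfold ss.
    replace (2 * x * - INR (S n)) with (- (2 * x * INR (S n))) by ring. rewrite sin_neg.
    replace ((- INR (S n))^2) with (INR (S n) ^2) by ring. ring. }
  unfold a in H1, H2, H3, H4; cbv beta in H1, H2, H3, H4.
  rewrite H1, H2, H3, H4, Series_opp.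
  rewrite (Series_incr_1 (fun n => ss b x (INR n))) by (apply exs_ss; auto).
  unfold ss at 1; simpl INR. rewrite Rmult_0_r, sin_0, Rmult_0_r.
  unfold Rt, RtoC, Cplus; simpl. f_equal. ring.
Qed.

Lemma cos_periodZ x k : cos (x + 2 * IZR k * PI) = cos x.
Proof.
  destruct k as [|p|p].
  - simpl. f_equal. ring.
  - rewrite <- (positive_nat_Z p), <- INR_IZR_INZ. apply cos_period.
  - rewrite <- Pos2Z.opp_pos, opp_IZR, <- (positive_nat_Z p), <- INR_IZR_INZ.
    rewrite <- (cos_period (x + 2 * - INR (Pos.to_nat p) * PI) (Pos.to_nat p)). f_equal. ring.
Qed.

Lemma Rt_period b x m : Rt b (x + PI * IZR m) = Rt b x.
Proof.
  unfold Rt. f_equal; apply Series_ext; intro n; unfold cc; f_equal.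
  - rewrite <- (cos_periodZ (2 * x * INR n) (m * Z.of_nat n)). f_equal.
    rewrite mult_IZR, <- INR_IZR_INZ. ring.
  - rewrite <- (cos_periodZ (2 * x * INR (S n)) (m * Z.of_nat (S n))). f_equal.
    rewrite mult_IZR, <- INR_IZR_INZ. ring.
Qed.

Lemma cos_lip u v : Rabs (cos u - cos v) <= Rabs (u - v).
Proof.
  destruct (MVT_abs cos (fun c => - sin c) v u) as [c [Hc _]].
  intros; apply derivable_pt_lim_cos.
  rewrite Hc. rewrite <- (Rmult_1_l (Rabs (u - v))) at 2.
  apply Rmult_le_compat_r. apply Rabs_pos. rewrite Rabs_Ropp. apply Rabs_le, SIN_bound.
Qed.

Lemma cc_diff b y x k : 0 <= k ->
  Rabs (cc b y k - cc b x k) <= 2 * Rabs (y - x) * (k * exp (- PI * b * k ^ 2)).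
Proof.
  intros hk. unfold cc. rewrite <- Rmult_minus_distr_l, Rabs_mult, (Rabs_pos_eq (exp _)) by (left; apply exp_pos).
  pose proof (cos_lip (2*y*k) (2*x*k)).
  replace (Rabs (2 * y * k - 2 * x * k)) with (2 * Rabs (y - x) * k) in H.
  2:{ replace (2 * y * k - 2 * x * k) with ((y - x) * (2 * k)) by ring.
      rewrite Rabs_mult, (Rabs_pos_eq (2*k)) by lra. ring. }
  pose proof (exp_pos (- PI * b * k ^ 2)).
  rewrite (Rmult_comm (exp _)). replace (2 * Rabs (y - x) * (k * exp (- PI * b * k ^ 2))) with
    ((2 * Rabs (y - x) * k) * exp (- PI * b * k ^ 2)) by ring.
  apply Rmult_le_compat_r; lra.
Qed.

Definition Sk b := Series1 (fun k : nat => INR k * exp (- PI * b * INR k ^ 2)).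

Lemma series_diff_bound b y x (a : nat -> R) :
  1/2 < b ->
  (forall n, Rabs (a n) <= 2 * Rabs (y - x) * (INR n * exp (- PI * b * INR n ^ 2))) ->
  Rabs (Series a) <= 2 * Rabs (y - x) * Sk b.
Proof.
  intros hb H.
  assert (E : ex_series (fun n => 2 * Rabs (y - x) * (INR n * exp (- PI * b * INR n ^ 2)))).
  { exact (@ex_series_scal_l R_AbsRing R_NormedModule (2*Rabs(y-x)) _ (exs_k b hb)). }
  eapply Rle_trans. apply Series_Rabs. apply (ex_series_le (V:=R_CompleteNormedModule) (fun n => Rabs (a n)) (fun n => 2 * Rabs (y - x) * (INR n * exp (- PI * b * INR n ^ 2)))); [intro n; change (norm (Rabs (a n))) with (Rabs (Rabs (a n))); rewrite Rabs_Rabsolu; apply H | exact E].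
  eapply Rle_trans. apply Series_le. 2: exact E. intros n; split; [apply Rabs_pos | apply H].
  rewrite Series_scal_l. right. f_equal.
  rewrite Series_incr_1 by (apply exs_k; auto). simpl INR at 1. rewrite Rmult_0_l, Rplus_0_l. reflexivity.
Qed.

Lemma series_diff_bound1 b y x (a : nat -> R) :
  1/2 < b ->
  (forall n, Rabs (a n) <= 2 * Rabs (y - x) * (INR (S n) * exp (- PI * b * INR (S n) ^ 2))) ->
  Rabs (Series a) <= 2 * Rabs (y - x) * Sk b.
Proof.
  intros hb H.
  assert (E : ex_series (fun n => 2 * Rabs (y - x) * (INR (S n) * exp (- PI * b * INR (S n) ^ 2)))).
  { exact (@ex_series_scal_l R_AbsRing R_NormedModule (2*Rabs(y-x)) _
      (proj1 (ex_series_incr_1 (fun n => INR n * exp (- PI * b * INR n ^ 2))) (exs_k b hb))). }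
  eapply Rle_trans. apply Series_Rabs. apply (ex_series_le (V:=R_CompleteNormedModule) (fun n => Rabs (a n)) (fun n => 2 * Rabs (y - x) * (INR (S n) * exp (- PI * b * INR (S n) ^ 2)))); [intro n; change (norm (Rabs (a n))) with (Rabs (Rabs (a n))); rewrite Rabs_Rabsolu; apply H | exact E].
  eapply Rle_trans. apply Series_le. 2: exact E. intros n; split; [apply Rabs_pos | apply H].
  rewrite Series_scal_l. right. reflexivity.
Qed.

Lemma Rt_diff b y x : 1/2 < b -> Rabs (Rt b y - Rt b x) <= 4 * Rabs (y - x) * Sk b.
Proof.
  intros hb. unfold Rt.
  replace (Series (fun n => cc b y (INR n)) + Series (fun n => cc b y (INR (S n))) -
    (Series (fun n => cc b x (INR n)) + Series (fun n => cc b x (INR (S n)))))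
  with ((Series (fun n => cc b y (INR n)) - Series (fun n => cc b x (INR n))) +
        (Series (fun n => cc b y (INR (S n))) - Series (fun n => cc b x (INR (S n))))) by ring.
  rewrite <- !Series_minus.
  2,3: apply (ex_series_incr_1 (fun n => cc b _ (INR n))), exs_cc; auto.
  2,3: apply exs_cc; auto.
  eapply Rle_trans. apply Rabs_triang.
  replace (4 * Rabs (y - x) * Sk b) with (2 * Rabs (y - x) * Sk b + 2 * Rabs (y - x) * Sk b) by ring.
  apply Rplus_le_compat.
  - apply series_diff_bound; auto. intros n; apply cc_diff, pos_INR.
  - apply series_diff_bound1; auto. intros n; apply cc_diff, pos_INR.
Qed.

Theorem lemma6p1 (b : R) (m : Z) (hb : 1 / 2 < b) :
  let f := fun t : R => theta3 (RtoC (PI * t + 2 * PI * b * IZR m)) ((0, b) : C) in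
  let g := fun t : R => theta3 (RtoC (PI * t)) ((0, b) : C) in
  forall t : R,
    Cmod (f t - g t)%C <=
    8 * PI * Rabs (IZR m) * (b - 1 / 2) *
      Series1 (fun k : nat => INR k * exp (- PI * b * INR k ^ 2)).
Proof.
  intros f g t. unfold f, g. rewrite !theta_eq by auto.
  replace (RtoC (Rt b (PI * t + 2 * PI * b * IZR m)) - RtoC (Rt b (PI * t)))%C
    with (RtoC (Rt b (PI * t + 2 * PI * b * IZR m) - Rt b (PI * t))).
  2:{ unfold RtoC, Cminus, Cplus, Copp; simpl. rewrite Ropp_0, Rplus_0_r. reflexivity. }
  rewrite Cmod_R.
  replace (PI * t + 2 * PI * b * IZR m) with ((PI * t + 2 * PI * (b - 1/2) * IZR m) + PI * IZR m) by field.
  rewrite Rt_period. fold (Sk b).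
  eapply Rle_trans. apply Rt_diff; auto.
  replace (PI * t + 2 * PI * (b - 1 / 2) * IZR m - PI * t) with ((2 * PI * (b - 1/2)) * IZR m) by ring.
  rewrite Rabs_mult, (Rabs_pos_eq (2 * PI * (b - 1/2))).
  2:{ pose proof PI_RGT_0. apply Rmult_le_pos; lra. }
  right; ring.
Qed.
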